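(* Let $G$ be a Tanner graph representing the binary code $\mathcal{C}$, and let $p$ be a lift-realizable pseudocodeword of $G$. Then $p$ can be written as $p=c^{(1)}+c^{(2)}+\cdots+c^{(k)}+r$, where $c^{(1)},\dots,c^{(k)}\in\mathcal{C}$ are (not necessarily distinct) codewords and $r$ is a nonnegative integer vector such that no nonzero codeword $c\in\mathcal{C}$ has $\operatorname{supp}(c)\subseteq\operatorname{supp}(r)$; moreover, either $r$ is the all-zeros vector or every entry of $r$ is $0$ or even.
   Context: A Tanner graph $G$ is a finite bipartite graph with variable nodes $v_1,\dots,v_n$ and check nodes; its code $\mathcal{C}$ consists of all $x\in\{0,1\}^n$ with every check node having an even number of neighbours $v_i$ with $x_i=1$. A degree-$\ell$ lift replaces each node by $\ell$ copies and each edge by a perfect matching between copy-sets; a lift-realizable pseudocodeword $p\in\mathbb{Z}_{\ge0}^n$ is obtained from a codeword of the code of a finite lift by letting $p_i$ be the number of copies of $v_i$ assigned 1. $\operatorname{supp}(x)=\{i:x_i\neq0\}$. *)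

(* Defs.v *)
From mathcomp Require Import all_boot all_fingroup.
Set Implicit Arguments. Unset Strict Implicit. Unset Printing Implicit Defensive.

(* A (finite, simple) bipartite graph with variable nodes V and check nodes C,
   given by its adjacency relation H : C -> V -> bool.  A Tanner graph with n
   variable nodes and m check nodes is the case V = 'I_n, C = 'I_m. *)

Definition in_code (V C : finType) (H : C -> V -> bool) (x : V -> bool) : Prop :=
  forall j : C, ~~ odd #|[pred i | H j i && x i]|.

(* Degree-l lift: each node v is replaced by copies (v, a), a : 'I_l, and each
   edge (j, i) by the perfect matching (j, a) -- (i, pi j i a) between the
   copy-sets (pi j i is only used when (j, i) is an edge). *)
Definition lift_adj (n m l : nat) (H : 'I_m -> 'I_n -> bool)
    (pi : 'I_m -> 'I_n -> {perm 'I_l}) :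
    ('I_m * 'I_l)%type -> ('I_n * 'I_l)%type -> bool :=
  fun ja ib => H ja.1 ib.1 && (pi ja.1 ib.1 ja.2 == ib.2).

Definition lift_realizable (n m : nat) (H : 'I_m -> 'I_n -> bool)
    (p : 'I_n -> nat) : Prop :=
  exists (l : nat) (pi : 'I_m -> 'I_n -> {perm 'I_l})
         (x : ('I_n * 'I_l)%type -> bool),
    0 < l /\ in_code (lift_adj H pi) x /\
    forall i : 'I_n, p i = #|[pred b : 'I_l | x (i, b)]|.

Definition supp_b (n : nat) (c : 'I_n -> bool) : {set 'I_n} := [set i | c i].
Definition supp_n (n : nat) (r : 'I_n -> nat) : {set 'I_n} := [set i | r i != 0].

(* Main.v *)
Require Import Defs.
From mathcomp Require Import all_boot all_fingroup.
From Stdlib Require Import Classical.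

Lemma card_sum (T : finType) (P Q : pred T) :
  #|[pred i | P i && Q i]| = \sum_(i | P i) (Q i : nat).
Proof.
rewrite -sum1_card big_mkcondr /=; apply: eq_bigr => i _; by case: (Q i).
Qed.

Lemma sum_odd (T : finType) (P : pred T) (f g : T -> nat) :
  (forall i, odd (f i) = odd (g i)) ->
  odd (\sum_(i | P i) f i) = odd (\sum_(i | P i) g i).
Proof.
move=> Hfg; apply: (big_ind2 (fun a b => odd a = odd b)) => //.
by move=> a b c d E1 E2; rewrite !oddD E1 E2.
Qed.

Lemma in_codeE (n m : nat) (H : 'I_m -> 'I_n -> bool) (x : 'I_n -> bool) (g : 'I_n -> nat) :
  (forall i, odd (g i) = x i) ->
  in_code H x <-> forall j, ~~ odd (\sum_(i | H j i) g i).
Proof.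
move=> Hg; rewrite /in_code.
have E : forall j, odd #|[pred i | H j i && x i]| = odd (\sum_(i | H j i) g i).
  move=> j; rewrite card_sum; apply: sum_odd => i; by rewrite oddb Hg.
by split=> Hc j; [rewrite -E | rewrite E].
Qed.

Lemma lift_parity (n m : nat) (H : 'I_m -> 'I_n -> bool) (p : 'I_n -> nat) :
  lift_realizable H p -> in_code H (fun i => odd (p i)).
Proof.
case=> l [pi [x [_ [Hx Hp]]]].
apply/(@in_codeE _ _ H _ p) => // j.
have -> : \sum_(i | H j i) p i = \sum_(a < l) #|[pred ib | lift_adj H pi (j, a) ib && x ib]|.
  transitivity (\sum_(i | H j i) \sum_(a < l) (x (i, pi j i a) : nat)).
    apply: eq_bigr => i _; rewrite Hp -sum1_card big_mkcond /=.
    rewrite (reindex_inj (h := pi j i)) /=; last exact: perm_inj.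
    by apply: eq_bigr => a _; rewrite inE; case: (x _).
  rewrite exchange_big /=; apply: eq_bigr => a _.
  rewrite -sum1_card [RHS]big_mkcond [LHS]big_mkcond /=.
  rewrite (eq_bigr (fun ib => (fun i b => if lift_adj H pi (j,a) (i,b) && x (i,b) then 1 else 0) ib.1 ib.2)); last by move=> [i b] _; rewrite inE.
  rewrite -(pair_bigA _ (fun i b => if lift_adj H pi (j,a) (i,b) && x (i,b) then 1 else 0)) /=.
  apply: eq_bigr => i _; rewrite /lift_adj /=.
  case: (H j i) => /=; last by rewrite big1.
  rewrite (bigD1 (pi j i a)) //= eqxx /= big1 ?addn0; first by case: (x _).
  by move=> b /negbTE; rewrite eq_sym => ->.
apply: (big_ind (fun v => ~~ odd v)) => //.
  by move=> u v Hu Hv; rewrite oddD (negbTE Hu) (negbTE Hv).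
Qed.

Lemma greedy (n m : nat) (H : 'I_m -> 'I_n -> bool) (N : nat) :
  forall r : 'I_n -> nat, \sum_i r i < N -> in_code H (fun i => odd (r i)) ->
  exists (k : nat) (c : 'I_k -> 'I_n -> bool) (r' : 'I_n -> nat),
    (forall t : 'I_k, in_code H (c t)) /\
    (forall i : 'I_n, r i = (\sum_(t < k) c t i + r' i)%N) /\
    (forall c' : 'I_n -> bool, in_code H c' -> (exists i, c' i) ->
       ~ (supp_b c' \subset supp_n r')) /\
    ((forall i : 'I_n, r' i = 0%N) \/ (forall i : 'I_n, r' i = 0%N \/ ~~ odd (r' i))).
Proof.
elim: N => [//|N IH] r Hsum Hpar.
case: (classic (exists c', in_code H c' /\ (exists i, c' i) /\ supp_b c' \subset supp_n r)).
  move=> [c' [Hc' [[i0 Hi0] Hsub]]].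
  have Hle : forall i, (c' i : nat) <= r i.
    move=> i; case Ei: (c' i) => //=.
    have : i \in supp_b c' by rewrite inE Ei.
    by move/(subsetP Hsub); rewrite inE lt0n.
  pose r1 := fun i => r i - c' i.
  have Hr : forall i, r i = c' i + r1 i by move=> i; rewrite /r1 subnKC.
  have Hs1 : \sum_i r1 i < N.
    have : \sum_i r i = \sum_i (c' i : nat) + \sum_i r1 i.
      by rewrite -big_split /=; apply: eq_bigr => i _; rewrite Hr.
    have : 0 < \sum_i (c' i : nat) by rewrite (bigD1 i0) //= Hi0.
    move=> Hpos Heq; move: Hsum; rewrite Heq; move: Hpos.
    move: (\sum_i (c' i : nat)) (\sum_i r1 i) => a b; rewrite ltnS => Ha Hab.
    apply: leq_trans Hab; by rewrite -{1}(add0n b) ltn_add2r.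
  have Hpar1 : in_code H (fun i => odd (r1 i)).
    apply/(@in_codeE _ _ H _ (fun i => c' i + r i)).
      by move=> i; rewrite Hr addnA oddD addnn odd_double.
    move=> j; rewrite big_split oddD /=.
    move/(@in_codeE _ _ H _ (fun i => c' i)): Hc' => Hc'.
    move/(@in_codeE _ _ H _ r): Hpar => Hpar.
    rewrite (negbTE (Hc' _ j)) ?(negbTE (Hpar _ j)) //; by move=> i; rewrite oddb.
  have [k [c [r' [Hc [Hdec Hrest]]]]] := IH r1 Hs1 Hpar1.
  exists k.+1, (fun t => if unlift ord0 t is Some t' then c t' else c'), r'.
  split; first by move=> t; case: (unlift ord0 t).
  split; last exact: Hrest.
  move=> i; rewrite big_ord_recl /= unlift_none Hr Hdec addnA.
  congr (_ + _ + _); apply: eq_bigr => t _; by rewrite liftK.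
move=> Hno; exists 0, (fun _ _ => false), r.
split; first by case.
split; first by move=> i; rewrite big_ord0.
split.
  by move=> c' Hc' Hne Hs; apply: Hno; exists c'.
right=> i; right; apply/negP => Hodd; apply: Hno.
exists (fun i => odd (r i)); split => //; split; first by exists i.
apply/subsetP => i'; rewrite !inE; by case: (r i').
Qed.

Theorem lemma5 (n m : nat) (H : 'I_m -> 'I_n -> bool) (p : 'I_n -> nat) :
  lift_realizable H p ->
  exists (k : nat) (c : 'I_k -> 'I_n -> bool) (r : 'I_n -> nat),
    (forall t : 'I_k, in_code H (c t)) /\
    (forall i : 'I_n, p i = (\sum_(t < k) c t i + r i)%N) /\
    (forall c' : 'I_n -> bool, in_code H c' -> (exists i, c' i) ->
       ~ (supp_b c' \subset supp_n r)) /\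
    ((forall i : 'I_n, r i = 0%N) \/ (forall i : 'I_n, r i = 0%N \/ ~~ odd (r i))).
Proof.
move=> Hp; apply: (@greedy n m H (\sum_i p i).+1) => //.
exact: lift_parity.
Qed.
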